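(* Let $a\in(0,1)$ and let $h:\mathbb R_+\to\mathbb R_+$ be differentiable, bounded and bounded away from $0$ on $(0,\infty)$, with $h_t=h_{at}$ for all $t>0$. If $\zeta>-1$, then $$\int_1^ts^\zeta h_s\,ds\sim t^{\zeta+1}\tilde h_t\quad\text{as }t\to\infty,\qquad\text{where}\quad\tilde h_t=-\log a\cdot\int_0^\infty a^{r(1+\zeta)}h_{a^rt}\,dr,$$ and $f\sim g$ means $f_t/g_t\to1$. *)

(* Defs.v *)
From Stdlib Require Import Reals.
From Coquelicot Require Import Coquelicot.
Open Scope R_scope.

Definition htilde (a zeta : R) (h : R -> R) (t : R) : R :=
  - ln a * RInt_gen (fun r => Rpower a (r * (1 + zeta)) * h (Rpower a r * t))
                    (at_point 0) (Rbar_locally p_infty).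

(* Main.v *)
Require Import Defs.
From Stdlib Require Import Reals Lra Classical.
From Coquelicot Require Import Coquelicot.
Open Scope R_scope.
Lemma is_RInt_exp c y x : c <> 0 -> is_RInt (fun r => exp (c*r)) y x ((exp(c*x) - exp(c*y))/c).
Proof.
  intros Hc.
  replace ((exp(c*x) - exp(c*y))/c) with (minus ((fun r => exp(c*r)/c) x) ((fun r => exp(c*r)/c) y)).
  2:{ unfold minus, plus, opp; simpl. field. auto. }
  apply (is_RInt_derive (fun r => exp(c*r)/c)).
  - intros z _. auto_derive; auto. field. auto.
  - intros z _. apply (@ex_derive_continuous R_AbsRing R_NormedModule). auto_derive. auto.
Qed.
Lemma improper (f B : R -> R) :
 (forall r, 0 <= r -> continuous f r) -> (forall r, 0 <= r -> 0 <= f r) ->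
 (forall x y, 0 <= y <= x -> RInt f y x <= B y) ->
 forall y, 0 <= y -> RInt f 0 y <= RInt_gen f (at_point 0) (Rbar_locally p_infty) <= RInt f 0 y + B y.
Proof.
  intros Hc Hp HB.
  assert (exI : forall u v, 0 <= u -> 0 <= v -> ex_RInt f u v).
  { intros u v Hu Hv. apply (@ex_RInt_continuous R_CompleteNormedModule). intros z Hz. apply Hc.
    apply Rle_trans with (Rmin u v); [|apply Hz]. apply Rmin_glb; lra. }
  assert (mono : forall u v, 0 <= u <= v -> RInt f 0 u <= RInt f 0 v).
  { intros u v Huv. rewrite <- (@RInt_Chasles R_CompleteNormedModule f 0 u v) by (apply exI; lra).
    assert (0 <= RInt f u v). { apply RInt_ge_0. lra. apply exI; lra. intros; apply Hp; lra. }
    unfold plus; simpl. lra. }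
  assert (Bp : forall y, 0 <= y -> 0 <= B y).
  { intros y Hy. replace 0 with (RInt f y y) by (rewrite RInt_point; reflexivity). apply HB. lra. }
  set (E := fun z => exists x, 0 <= x /\ z = RInt f 0 x).
  assert (HbE : bound E).
  { exists (B 0). intros z [x [Hx ->]]. apply HB. lra. }
  assert (HnE : exists z, E z). { exists (RInt f 0 0). exists 0. split; [lra|auto]. }
  destruct (completeness E HbE HnE) as [l [Hub Hlub]].
  assert (Hg : is_RInt_gen f (at_point 0) (Rbar_locally p_infty) l).
  { intros P [eps HP].
    destruct (classic (exists x0, 0 <= x0 /\ l - eps < RInt f 0 x0)) as [[x0 [Hx0 Hlt]]|Hn].
    - apply (Filter_prod _ _ _ (fun x => x = 0) (fun v => x0 < v)).
      + reflexivity.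
      + exists x0. auto.
      + intros u v Hu Hv. subst u. simpl. exists (RInt f 0 v). split.
        * apply (@RInt_correct R_CompleteNormedModule). apply exI; lra.
        * apply HP. unfold ball; simpl. unfold AbsRing_ball, abs, minus, plus, opp; simpl.
          assert (RInt f 0 v <= l). { apply Hub. exists v. split; [lra|auto]. }
          assert (RInt f 0 x0 <= RInt f 0 v) by (apply mono; lra).
          apply Rabs_def1; lra.
    - exfalso. assert (l <= l - eps). { apply Hlub. intros z [x [Hx ->]].
        apply Rnot_lt_le. intro H. apply Hn. exists x. auto. }
      destruct eps; simpl in *; lra. }
  rewrite (is_RInt_gen_unique f l Hg).
  intros y Hy. split.
  - apply Hub. exists y. auto.
  - apply Hlub. intros z [x [Hx ->]].
    destruct (Rle_dec x y).
    + pose proof (mono x y ltac:(lra)). pose proof (Bp y Hy). lra.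
    + rewrite <- (@RInt_Chasles R_CompleteNormedModule f 0 y x) by (apply exI; lra). unfold plus; simpl.
      pose proof (HB x y ltac:(lra)). lra.
Qed.
Lemma cont_mult (f g : R->R) x : continuous f x -> continuous g x -> continuous (fun y => f y * g y) x.
Proof. apply (@continuous_mult R_UniformSpace R_AbsRing). Qed.
Lemma cont_comp (f g : R->R) x : continuous f x -> continuous g (f x) -> continuous (fun y => g (f y)) x.
Proof. apply (@continuous_comp R_UniformSpace R_UniformSpace R_UniformSpace). Qed.
Lemma cont_der (f : R -> R) x : ex_derive f x -> continuous f x.
Proof. apply (@ex_derive_continuous R_AbsRing R_NormedModule). Qed.

Lemma cov (a zeta : R) (h : R -> R) t : 0 < a < 1 -> (forall u, 0 < u -> continuous h u) -> 1 < t ->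
  RInt (fun r => Rpower a (r * (1 + zeta)) * h (Rpower a r * t)) 0 (ln t / - ln a)
  = RInt (fun s => Rpower s zeta * h s) 1 t / ((- ln a) * Rpower t (zeta + 1)).
Proof.
  intros Ha Hc Ht.
  assert (Hk : ln a < 0). { rewrite <- ln_1. apply ln_increasing; lra. }
  assert (Hlt : 0 < ln t). { rewrite <- ln_1. apply ln_increasing; lra. }
  set (f := fun s => Rpower s zeta * h s).
  assert (Hfc : forall u, 0 < u -> continuous f u).
  { intros u Hu. unfold f. apply cont_mult; [|apply Hc; auto].
    apply cont_der. exists (zeta * Rpower u (zeta - 1)). apply is_derive_Reals.
    apply derivable_pt_lim_power; auto. }
  assert (HG := is_RInt_comp f (fun r => Rpower a r * t) (fun r => ln a * Rpower a r * t) 0 (ln t / - ln a)).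
  simpl in HG.
  assert (E0 : Rpower a 0 * t = t). { rewrite Rpower_O; lra. }
  assert (E1 : Rpower a (ln t / - ln a) * t = 1).
  { unfold Rpower. replace (ln t / - ln a * ln a) with (- ln t) by (field; lra).
    rewrite exp_Ropp, exp_ln by lra. field. lra. }
  rewrite E0, E1 in HG.
  assert (HI : is_RInt (fun y => scal (ln a * Rpower a y * t) (f (Rpower a y * t))) 0 (ln t / - ln a) (RInt f t 1)).
  { apply HG.
    - intros x _. apply Hfc. unfold Rpower. apply Rmult_lt_0_compat; [apply exp_pos|lra].
    - intros x _. split.
      + unfold Rpower. auto_derive; auto. ring.
      + apply cont_der. unfold Rpower. auto_derive. auto. }
  clear HG.
  assert (Hex : ex_RInt f 1 t).
  { apply (@ex_RInt_continuous R_CompleteNormedModule). intros z Hz. apply Hfc.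
    rewrite Rmin_left in Hz by lra. lra. }
  rewrite <- (@opp_RInt_swap R_CompleteNormedModule f 1 t Hex) in HI.
  set (G := RInt f 1 t) in *.
  set (T := Rpower t (zeta + 1)).
  assert (HT : 0 < T) by (unfold T, Rpower; apply exp_pos).
  apply (is_RInt_scal _ _ _ (/ (ln a * T))) in HI.
  replace (G / (- ln a * T)) with (scal (/ (ln a * T)) (opp G)).
  2:{ unfold scal; simpl; unfold mult, opp; simpl. field. lra. }
  apply is_RInt_unique.
  eapply is_RInt_ext; [|apply HI].
  intros x _. unfold f, scal; simpl; unfold mult; simpl.
    unfold T, Rpower.
    rewrite ln_mult by (try apply exp_pos; lra). rewrite ln_exp.
    replace (zeta * (x * ln a + ln t)) with ((x * (1 + zeta) * ln a - x * ln a) + (zeta + 1) * ln t - ln t) by ring.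
    assert (E : exp (x * (1 + zeta) * ln a - x * ln a + (zeta + 1) * ln t - ln t) * exp (x * ln a) * exp (ln t)
               = exp (x * (1 + zeta) * ln a) * exp ((zeta + 1) * ln t)).
    { rewrite <- !exp_plus. f_equal. ring. }
    rewrite exp_ln in E by lra.
    assert (P1 := exp_pos (x * ln a)). assert (P2 := exp_pos ((zeta + 1) * ln t)).
    replace (exp (x * (1 + zeta) * ln a - x * ln a + (zeta + 1) * ln t - ln t))
      with (exp (x * (1 + zeta) * ln a) * exp ((zeta + 1) * ln t) / (exp (x * ln a) * t)).
    2:{ rewrite <- E. field. lra. }
    field. lra.
Qed.

Lemma RInt_expc (a zeta y x : R) : 0 < a < 1 -> -1 < zeta ->
  RInt (fun r => exp (r * (1 + zeta) * ln a)) y x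
  = (exp ((1 + zeta) * ln a * x) - exp ((1 + zeta) * ln a * y)) / ((1 + zeta) * ln a).
Proof.
  intros Ha Hz.
  assert (Hk : ln a < 0). { rewrite <- ln_1. apply ln_increasing; lra. }
  apply is_RInt_unique. eapply is_RInt_ext; [|apply is_RInt_exp].
  - intros r _. simpl. f_equal. ring.
  - apply Rmult_integral_contrapositive; split; lra.
Qed.

Lemma key (a zeta : R) (h : R -> R) m M t :
  0 < a < 1 -> (forall u, 0 < u -> continuous h u) -> 0 < m ->
  (forall u, 0 < u -> m <= h u <= M) -> -1 < zeta -> 1 < t ->
  RInt (fun s => Rpower s zeta * h s) 1 t <= Rpower t (zeta + 1) * htilde a zeta h t
    <= RInt (fun s => Rpower s zeta * h s) 1 t + M / (1 + zeta) /\
  m * (Rpower t (zeta + 1) - 1) / (1 + zeta) <= RInt (fun s => Rpower s zeta * h s) 1 t.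
Proof.
  intros Ha Hc Hm Hb Hz Ht.
  assert (Hk : ln a < 0). { rewrite <- ln_1. apply ln_increasing; lra. }
  assert (Hlt : 0 < ln t). { rewrite <- ln_1. apply ln_increasing; lra. }
  assert (HM : m <= M) by (destruct (Hb 1); lra).
  set (c := (1 + zeta) * ln a).
  assert (Hcn : c < 0) by (unfold c; nra).
  set (ft := fun r => Rpower a (r * (1 + zeta)) * h (Rpower a r * t)).
  assert (Hpos : forall r, 0 < Rpower a r * t).
  { intros r. unfold Rpower. apply Rmult_lt_0_compat; [apply exp_pos|lra]. }
  assert (Hftc : forall r, continuous ft r).
  { intros r. unfold ft. apply cont_mult.
    - apply cont_der. unfold Rpower. auto_derive. auto.
    - apply (cont_comp (fun r => Rpower a r * t) h).
      + apply cont_der. unfold Rpower. auto_derive. auto.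
      + apply Hc, Hpos. }
  assert (Hftb : forall r, m * exp (r * (1 + zeta) * ln a) <= ft r <= M * exp (r * (1 + zeta) * ln a)).
  { intros r. unfold ft. change (Rpower a (r * (1 + zeta))) with (exp (r * (1 + zeta) * ln a)).
    assert (P := exp_pos (r * (1 + zeta) * ln a)). destruct (Hb _ (Hpos r)). split; nra. }
  assert (Hexe : forall y x, ex_RInt (fun r => exp (r * (1 + zeta) * ln a)) y x).
  { intros y x. apply (@ex_RInt_continuous R_CompleteNormedModule). intros z _.
    apply cont_der. auto_derive. auto. }
  assert (Hexf : forall y x, ex_RInt ft y x).
  { intros y x. apply (@ex_RInt_continuous R_CompleteNormedModule). intros z _. apply Hftc. }
  assert (HRM : forall K y x, RInt (fun r => K * exp (r * (1 + zeta) * ln a)) y x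
                     = K * ((exp (c * x) - exp (c * y)) / c)).
  { intros K y x. unfold c. rewrite <- (RInt_expc a zeta y x) by auto.
    apply (@RInt_scal R_CompleteNormedModule). apply Hexe. }
  set (B := fun y => M * exp (c * y) / (- c)).
  assert (HB : forall x y, 0 <= y <= x -> RInt ft y x <= B y).
  { intros x y Hxy.
    apply Rle_trans with (RInt (fun r => M * exp (r * (1 + zeta) * ln a)) y x).
    - apply RInt_le; try lra; auto.
      + apply (@ex_RInt_continuous R_CompleteNormedModule). intros z _.
        apply cont_der. auto_derive. auto.
      + intros r _. apply Hftb.
    - rewrite HRM. unfold B. assert (P1 := exp_pos (c * x)). assert (P2 := exp_pos (c * y)).
      replace (M * ((exp (c * x) - exp (c * y)) / c)) with (M * exp (c * y) / - c - M * exp (c * x) / - c)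
        by (field; lra).
      assert (0 <= M * exp (c * x) / - c).
      { apply Rmult_le_pos. nra. left. apply Rinv_0_lt_compat. lra. }
      lra. }
  set (R0 := ln t / - ln a).
  assert (HR0 : 0 <= R0). { unfold R0. apply Rmult_le_pos; [lra|]. left. apply Rinv_0_lt_compat. lra. }
  destruct (improper ft B (fun r _ => Hftc r) (fun r _ => ltac:(pose proof (Hftb r); pose proof (exp_pos (r * (1 + zeta) * ln a)); nra)) HB R0 HR0) as [L1 L2].
  assert (Hcov := cov a zeta h t Ha Hc Ht). fold ft R0 in Hcov. rewrite Hcov in L1, L2.
  set (G := RInt (fun s => Rpower s zeta * h s) 1 t) in *.
  set (L := RInt_gen ft (at_point 0) (Rbar_locally p_infty)) in *.
  set (T := Rpower t (zeta + 1)).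
  assert (HT : 0 < T) by (unfold T, Rpower; apply exp_pos).
  assert (EcR : exp (c * R0) = / T).
  { unfold T, R0, c, Rpower. rewrite <- exp_Ropp. f_equal. field. lra. }
  assert (Hlow : RInt (fun r => m * exp (r * (1 + zeta) * ln a)) 0 R0 <= RInt ft 0 R0).
  { apply RInt_le; auto. apply (@ex_RInt_continuous R_CompleteNormedModule). intros z _.
    apply cont_der. auto_derive. auto. intros r _. apply Hftb. }
  rewrite HRM, Hcov, EcR in Hlow. rewrite Rmult_0_r, exp_0 in Hlow.
  unfold B in L2. rewrite EcR in L2.
  assert (Ht' : htilde a zeta h t = - ln a * L) by reflexivity.
  rewrite Ht'. fold T.
  fold T in L1, L2, Hlow.
  set (X := - ln a) in *.
  assert (HX : 0 < X) by (unfold X; lra).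
  assert (Ec : c = - ((1 + zeta) * X)) by (unfold c, X; ring).
  rewrite Ec in L2, Hlow.
  set (F := G / (X * T)) in *.
  assert (EG : @eq R G (X * T * F)).
  { unfold F, Rdiv. rewrite (Rmult_comm G), <- Rmult_assoc, Rinv_r, Rmult_1_l; [reflexivity|]. apply Rgt_not_eq. nra. }
  rewrite EG.
  assert (HXT : 0 < X * T) by nra.
  replace (M * / T / - - ((1 + zeta) * X)) with (M / (1 + zeta) / (X * T)) in L2 by (field; lra).
  replace (m * ((/ T - 1) / - ((1 + zeta) * X))) with (m * (T - 1) / (1 + zeta) / (X * T)) in Hlow by (field; lra).
  split; [split|].
  - replace (X * T * F) with ((X * T) * F) by ring. replace (T * (X * L)) with ((X * T) * L) by ring.
    apply Rmult_le_compat_l; lra.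
  - replace (T * (X * L)) with ((X * T) * L) by ring.
    apply Rle_trans with ((X * T) * (F + M / (1 + zeta) / (X * T))).
    + apply Rmult_le_compat_l; lra.
    + right. field. lra.
  - apply Rle_trans with ((X * T) * (m * (T - 1) / (1 + zeta) / (X * T))).
    + right. field. lra.
    + apply Rmult_le_compat_l; lra.
Qed.

Theorem lemma2p4p3 (a zeta : R) (h : R -> R) :
  0 < a < 1 ->
  (forall t, 0 < t -> ex_derive h t) ->
  (exists m M, 0 < m /\ forall t, 0 < t -> m <= h t <= M) ->
  (forall t, 0 < t -> h t = h (a * t)) ->
  -1 < zeta ->
  is_lim (fun t => RInt (fun s => Rpower s zeta * h s) 1 t
                   / (Rpower t (zeta + 1) * htilde a zeta h t))
         p_infty 1.
Proof.
  intros Ha Hd [m [M [Hm Hb]]] _ Hz.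
  assert (Hc : forall u, 0 < u -> continuous h u) by (intros u Hu; apply cont_der, Hd, Hu).
  assert (HM : m <= M) by (destruct (Hb 1); lra).
  apply is_lim_spec. intros eps. simpl.
  destruct eps as [e He]; simpl.
  set (K := M / (m * e * (1 + zeta))).
  exists (Rmax 1 (exp K)). intros t Ht.
  assert (Ht1 : 1 < t) by (apply Rle_lt_trans with (Rmax 1 (exp K)); [apply Rmax_l|auto]).
  assert (HtK : exp K < t) by (apply Rle_lt_trans with (Rmax 1 (exp K)); [apply Rmax_r|auto]).
  assert (HlnK : K < ln t). { rewrite <- (ln_exp K). apply ln_increasing; auto. apply exp_pos. }
  destruct (key a zeta h m M t Ha Hc Hm Hb Hz Ht1) as [[D1 D2] G1].
  set (G := RInt (fun s => Rpower s zeta * h s) 1 t) in *.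
  set (D := Rpower t (zeta + 1) * htilde a zeta h t) in *.
  assert (HT : 1 + (zeta + 1) * ln t < Rpower t (zeta + 1)).
  { unfold Rpower. apply exp_ineq1. apply Rgt_not_eq. apply Rmult_lt_0_compat; [lra|].
    apply Rle_lt_trans with K; auto. unfold K. left. apply Rdiv_lt_0_compat; [lra|].
    apply Rmult_lt_0_compat; [apply Rmult_lt_0_compat|]; lra. }
  set (T := Rpower t (zeta + 1)) in *.
  assert (E1 : m * ((zeta + 1) * K) = M / e) by (unfold K; field; lra).
  assert (H1 : m * ((zeta + 1) * K) < m * (T - 1)).
  { apply Rmult_lt_compat_l; [lra|]. assert ((zeta + 1) * K < (zeta + 1) * ln t) by (apply Rmult_lt_compat_l; lra). lra. }
  assert (H2 : M / e / (1 + zeta) < G).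
  { apply Rlt_le_trans with (m * (T - 1) / (1 + zeta)); auto.
    unfold Rdiv at 2. apply Rmult_lt_compat_r; [apply Rinv_0_lt_compat; lra|]. lra. }
  assert (H3 : M / (1 + zeta) < e * G).
  { replace (M / (1 + zeta)) with (e * (M / e / (1 + zeta))) by (field; lra).
    apply Rmult_lt_compat_l; lra. }
  assert (HMe : 0 < M / e / (1 + zeta)).
  { apply Rdiv_lt_0_compat; [apply Rdiv_lt_0_compat|]; lra. }
  assert (HD : 0 < D) by lra.
  assert (H4 : D - G < e * D) by nra.
  replace (G / D - 1) with (- ((D - G) * / D)) by (field; lra).
  assert (H5 : (D - G) * / D < e).
  { replace e with (e * D * / D) by (field; lra). apply Rmult_lt_compat_r; [apply Rinv_0_lt_compat|]; lra. }
  assert (H6 : 0 <= (D - G) * / D).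
  { apply Rmult_le_pos; [lra|]. left. apply Rinv_0_lt_compat; lra. }
  rewrite Rabs_Ropp, Rabs_pos_eq by lra. lra.
Qed.
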